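(* Let $n, m, k, l, s, t$ be positive integers with $\min\{m,n\}\geq (t+1)(k-t+1)$, $k\geq l\geq t+1\geq 4$ and $t+3\leq s \leq k+1$. Then \[(t+1)(k-s+2)(m-l+t-s+2)-(s-1-t)\big((m-l+t-s+1)(n-k-1)-(k-s+2)(l-t)\big)<0.\] *)

(* Defs.v *)
From Stdlib Require Import ZArith Lia.

(* Main.v *)
Require Import Defs.
From Stdlib Require Import ZArith Lia.
Open Scope Z_scope.

Theorem lemma3p2 (n m k l s t : Z)
  (hn : 0 < n) (hm : 0 < m) (hk : 0 < k) (hl : 0 < l) (hs : 0 < s) (ht : 0 < t)
  (hmin : Z.min m n >= (t + 1) * (k - t + 1))
  (hkl : k >= l) (hlt : l >= t + 1) (ht4 : t + 1 >= 4)
  (hs1 : t + 3 <= s) (hs2 : s <= k + 1) :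
  (t + 1) * (k - s + 2) * (m - l + t - s + 2)
  - (s - 1 - t) * ((m - l + t - s + 1) * (n - k - 1) - (k - s + 2) * (l - t)) < 0.
Proof.
  assert (Hm : m >= (t + 1) * (k - t + 1)) by lia.
  assert (Hn : n >= (t + 1) * (k - t + 1)) by lia.
  clear hmin.
  assert (hN : n - k - 1 >= t * (k - t)) by lia.
  assert (hM : m - l + t - s + 1 >= 2 * (k-t) + 1) by nia.
  replace (m - l + t - s + 2) with ((m - l + t - s + 1) + 1) by lia.
  assert (ha : s - 1 - t >= 2) by lia.
  assert (hB1 : k - s + 2 >= 1) by lia.
  assert (hB2 : k - s + 2 <= k - t - 1) by lia.
  assert (hL1 : l - t >= 1) by lia.
  assert (hL2 : l - t <= k - t) by lia.
  generalize dependent (s - 1 - t); intros a ha.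
  generalize dependent (k - s + 2); intros B hB1 hB2.
  generalize dependent (m - l + t - s + 1); intros M hM.
  generalize dependent (n - k - 1); intros N hN.
  generalize dependent (l - t); intros L hL1 hL2.
  generalize dependent (k - t); intros K ? ? ? ? ?.
  intros.
  assert (hK : K >= 1) by lia.
  assert (h1 : a * M * N >= a * M * (t * K)) by (apply Z.le_ge, Z.mul_le_mono_nonneg_l; nia).
  assert (h2 : (t+1) * B * (M+1) <= (t+1) * (K * M)) by (rewrite <- Z.mul_assoc; apply Z.mul_le_mono_nonneg_l; nia).
  assert (h3 : a * B * L <= a * (K * K)) by (rewrite <- Z.mul_assoc; apply Z.mul_le_mono_nonneg_l; nia).
  assert (h4 : 2 * (t+1) * (K*M) <= a * (t+1) * (K*M)) by (apply Z.mul_le_mono_nonneg_r; nia).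
  assert (h5 : K * K < K * M) by nia.
  assert (h6 : 2 * (a * (K*M)) <= (t-1) * (a * (K*M))) by (apply Z.mul_le_mono_nonneg_r; nia).
  nia.
Qed.
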